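(* Let $S$ be a closed subspace of $\ell_\infty$ with $c_0\subseteq S$. If $S$ has weak$^*$ sequentially compact dual ball, then $S$ is not an $\ell_\infty$-Grothendieck subspace.
   Context: A Banach space $X$ has weak$^*$ sequentially compact dual ball if every sequence in the closed unit ball of $X^*$ has a $\sigma(X^*,X)$-convergent subsequence. Let $S$ be a closed subspace of $\ell_\infty$ containing $c_0$ and let $j:c_0\to S$ be the inclusion map; $j^{**}:c_0^{**}\equiv\ell_\infty\to S^{**}$ identifies $\ell_\infty$ with a subspace of $S^{**}$. A sequence $(x_n^* )$ in $S^*$ is $\sigma(S^*,\ell_\infty)$-convergent to $x^*$ if $\langle j^{**}z,x_n^*\rangle\to\langle j^{**}z,x^*\rangle$ for every $z\in\ell_\infty$. The closed subspace $S$ of $\ell_\infty$ is an $\ell_\infty$-Grothendieck subspace if $c_0\subseteq S$ and every $\sigma(S^*,S)$-convergent sequence in $S^*$ is $\sigma(S^*,\ell_\infty)$-convergent (to the same limit). *)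

(* Defs.v *)
From HB Require Import structures.
From mathcomp Require Import all_boot all_order all_algebra.
From mathcomp Require Import all_classical all_reals all_analysis.
Set Implicit Arguments. Unset Strict Implicit. Unset Printing Implicit Defensive.
Import Order.TTheory GRing.Theory Num.Theory.
Import numFieldNormedType.Exports.
Local Open Scope classical_set_scope.
Local Open Scope ring_scope.

Section LinfDefs.
Variable R : realType.

Definition bounded_seq (x : nat -> R) : Prop := exists M : R, forall n, `|x n| <= M.

Definition linf_norm (x : nat -> R) : R := sup (range (fun n => `|x n|)).

Definition c0 : set (nat -> R) := [set x | x @ \oo --> (0 : R)].

Definition closed_subspace_linf (S : set (nat -> R)) : Prop :=
  [/\ S `<=` bounded_seq,
      S (fun _ => 0),
      (forall x y, S x -> S y -> S (fun n => x n + y n)),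
      (forall (a : R) x, S x -> S (fun n => a * x n)) &
      (forall (xs : nat -> nat -> R) (x : nat -> R),
          (forall k, S (xs k)) -> bounded_seq x ->
          (fun k => linf_norm (fun n => xs k n - x n)) @ \oo --> (0 : R) ->
          S x)].

(* f (only its values on S matter) is an element of the dual S^*:
   a bounded linear functional on S *)
Definition is_dual (S : set (nat -> R)) (f : (nat -> R) -> R) : Prop :=
  [/\ (forall x y, S x -> S y -> f (fun n => x n + y n) = f x + f y),
      (forall (a : R) x, S x -> f (fun n => a * x n) = a * f x) &
      exists C : R, forall x, S x -> `|f x| <= C * linf_norm x].

Definition in_dual_ball (S : set (nat -> R)) (f : (nat -> R) -> R) : Prop :=
  is_dual S f /\ (forall x, S x -> `|f x| <= linf_norm x).

Definition weak_star_cvg (S : set (nat -> R))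
    (fs : nat -> (nat -> R) -> R) (f : (nat -> R) -> R) : Prop :=
  forall x, S x -> (fun k => fs k x) @ \oo --> f x.

Definition wstar_seq_compact_ball (S : set (nat -> R)) : Prop :=
  forall fs : nat -> (nat -> R) -> R,
    (forall k, in_dual_ball S (fs k)) ->
    exists phi : nat -> nat, (forall k, (phi k < phi k.+1)%N) /\
      exists f, is_dual S f /\ weak_star_cvg S (fun k => fs (phi k)) f.

Definition unitv (n : nat) : nat -> R := fun m => if m == n then 1 else 0.

(* <j^{**} z, f> for z in l_infty = c_0^{**} and f in S^*:
   j^* f = f|_{c_0} is the l_1 sequence (f e_n)_n, and z acts on it
   by the canonical duality: sum_n z_n f(e_n). *)
Definition jss_pair (z : nat -> R) (f : (nat -> R) -> R) : R :=
  limn (series (fun n => z n * f (unitv n))).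

Definition linf_weak_cvg (fs : nat -> (nat -> R) -> R) (f : (nat -> R) -> R) : Prop :=
  forall z, bounded_seq z -> (fun k => jss_pair z (fs k)) @ \oo --> jss_pair z f.

Definition linf_grothendieck (S : set (nat -> R)) : Prop :=
  c0 `<=` S /\
  forall (fs : nat -> (nat -> R) -> R) (f : (nat -> R) -> R),
    (forall k, is_dual S (fs k)) -> is_dual S f ->
    weak_star_cvg S fs f -> linf_weak_cvg fs f.

End LinfDefs.

(* Main.v *)
Require Import Defs.
From mathcomp Require Import all_boot all_order all_algebra.
From mathcomp Require Import all_classical all_reals all_analysis.
Import Order.TTheory GRing.Theory Num.Theory.
Import numFieldNormedType.Exports.
Local Open Scope classical_set_scope.
Local Open Scope ring_scope.

Lemma twice_cvg : (fun k : nat => (2 * k)%N) @ \oo --> \oo.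
Proof.
move=> P [N _ HP]; exists N => // k /= hk; apply: HP => /=.
rewrite /= in hk *. by rewrite (leq_trans hk) // leq_pmull.
Qed.

Lemma twice1_cvg : (fun k : nat => (2 * k).+1) @ \oo --> \oo.
Proof.
move=> P [N _ HP]; exists N => // k /= hk; apply: HP => /=.
rewrite /= in hk *. by rewrite (leq_trans hk) // ltnW // ltnS leq_pmull.
Qed.

Lemma le_linf (R : realType) (x : nat -> R) n :
  bounded_seq x -> `|x n| <= linf_norm x.
Proof.
move=> [M hM]; rewrite /linf_norm; apply: ub_le_sup; last by exists n.
by exists M => _ [m _ <-].
Qed.

Lemma sum_unitv (R : realType) (z : nat -> R) a N : (a < N)%N ->
  \sum_(0 <= n < N) z n * unitv R n a = z a.
Proof.
move=> h; rewrite big_mkord (bigD1 (Ordinal h)) //= /unitv eqxx mulr1.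
rewrite big1 ?addr0 // => i /eqP ne; rewrite ifN ?mulr0 //.
by apply/eqP => e; apply: ne; apply: val_inj => /=.
Qed.

Theorem proposition3p6 (R : realType) (S : set (nat -> R)) :
  closed_subspace_linf S -> @c0 R `<=` S ->
  wstar_seq_compact_ball S -> ~ linf_grothendieck S.
Proof.
move=> [Sb S0 Sadd Smul Scl] c0S wsc [_ G].
pose d := fun k (x : nat -> R) => x k.
have db : forall k, in_dual_ball S (d k).
  move=> k; split; last by move=> x Sx; exact: le_linf (Sb _ Sx).
  split => //; exists 1 => x Sx; rewrite mul1r; exact: le_linf (Sb _ Sx).
have [phi [phiinc [f [fd fcvg]]]] := wsc d db.
pose g := fun k (x : nat -> R) => x (phi (2 * k)%N) - x (phi (2 * k).+1).
have gd : forall k, is_dual S (g k).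
  move=> k; split.
  - by move=> x y _ _; rewrite /g opprD addrACA.
  - by move=> a x _; rewrite /g mulrBr.
  exists 2 => x Sx; rewrite /g (le_trans (ler_normB _ _)) // mulr2n mulrDl mul1r.
  by rewrite lerD // le_linf //; apply: Sb.
have d0 : is_dual S (fun _ => 0).
  split => //; first by move=> *; rewrite addr0.
  - by move=> *; rewrite mulr0.
  by exists 0 => x _; rewrite mul0r normr0.
have gc : weak_star_cvg S g (fun _ => 0).
  move=> x Sx /=.
  have h1 := cvg_comp _ _ twice_cvg (fcvg x Sx).
  have h2 := cvg_comp _ _ twice1_cvg (fcvg x Sx).
  have h3 := cvgB h1 h2; rewrite subrr in h3; exact: h3.
have L := G g (fun _ => 0) gd d0 gc.
pose z := fun n => (if pselect (exists j, n = phi (2 * j)%N) then 1 else 0) : R.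
have zb : bounded_seq z.
  by exists 1 => n; rewrite /z; case: pselect => ?; rewrite ?normr1 ?normr0.
have := L z zb.
have jz0 : jss_pair z (fun _ => 0) = 0.
  rewrite /jss_pair (_ : series _ = fun=> 0); first by apply: cvg_lim => //; exact: cvg_cst.
  apply: funext => n; rewrite /series /=; rewrite big1 // => i _; by rewrite mulr0.
have jz1 : forall k, jss_pair z (g k) = 1.
  move=> k; rewrite /jss_pair; apply: cvg_lim => //.
  apply: cvg_near_cst.
  exists (maxn (phi (2 * k)%N) (phi (2 * k).+1)).+1 => // n /= hn.
  rewrite /series /=.
  under eq_bigr do rewrite /g mulrBr.
  rewrite sumrB !sum_unitv; last 2 first.
  - by rewrite (leq_trans _ hn) // ltnS leq_maxr.
  - by rewrite (leq_trans _ hn) // ltnS leq_maxl.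
  rewrite /z; case: pselect => [?|[]]; last by exists k.
  case: pselect => [[j hj]|?]; last by rewrite subr0.
  exfalso.
  have hom : {homo phi : i j / (i < j)%N}.
    by apply: homo_ltn => // ???; exact: ltn_trans.
  case: (ltngtP (2 * k).+1 (2 * j)) => c.
  - by move: (hom _ _ c); rewrite hj ltnn.
  - by move: (hom _ _ c); rewrite hj ltnn.
  - by move: c => /(congr1 odd); rewrite /= !oddM.
rewrite jz0 (_ : (fun k => jss_pair z (g k)) = fun=> 1); last first.
  by apply: funext => k; exact: jz1.
move=> h; have hs : hausdorff_space R by exact: norm_hausdorff.
have e1 := cvg_lim hs h.
rewrite lim_cst in e1.
  by move: (oner_neq0 R); rewrite e1 eqxx.
exact: hs.
Qed.
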